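(* Let $\eta_0,\eta_1,\dots$, $\mathbf{I}^\Omega$ and $\boldsymbol{\eta}^\Omega$ be as below. There exists a closed λ-term $\mathsf{Eq}$ such that for all $n\in\mathbb{N}$: $\mathsf{Eq}\,\underline{n}\,\mathbf{I}^\Omega=_\mathcal{B}\mathtt{I}$ and $\mathsf{Eq}\,\underline{n}\,\boldsymbol{\eta}^\Omega=_\mathcal{B}\eta_n$.
   Context: $\mathtt{I}=\lambda x.x$, $\Omega=(\lambda x.xx)(\lambda x.xx)$, $\underline n=\lambda fz.f^n(z)$ the Church numeral, $[M_1,\dots,M_n]=\lambda z.zM_1\cdots M_n$ ($z$ fresh), and for an effective enumeration $(M_n)_n$ (i.e. some closed $F$ has $F\underline n=_\beta M_n$) the stream $[M_n]_{n\in\mathbb{N}}$ is a λ-term with $[M_n]_{n\in\mathbb{N}}=_\beta[M_0,[M_{n+1}]_{n\in\mathbb{N}}]$. $\eta_0,\eta_1,\dots$ is an effective enumeration of closed λ-terms with $\eta_i\twoheadrightarrow_{\beta\eta}\mathtt{I}$ (finite η-expansions of the identity). $\mathbf{I}^\Omega$, $\boldsymbol{\eta}^\Omega$ are closed terms with $\mathbf{I}^\Omega yx=_\beta[y\Omega^{\sim n}x]_{n\in\mathbb{N}}$ and $\boldsymbol{\eta}^\Omega yx=_\beta[y\Omega^{\sim n}(\eta_nx)]_{n\in\mathbb{N}}$, where $y\Omega^{\sim n}$ is $y$ applied to $n$ copies of $\Omega$. $M=_\mathcal{B}N$ iff $BT(M)=BT(N)$. *)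

(* Defs.v *)
From Stdlib Require Import Arith List Relations.
Import ListNotations.

Inductive term : Type :=
| Var : nat -> term
| App : term -> term -> term
| Lam : term -> term.

Fixpoint lift (k c : nat) (t : term) : term :=
  match t with
  | Var n => if c <=? n then Var (n + k) else Var n
  | App t1 t2 => App (lift k c t1) (lift k c t2)
  | Lam t1 => Lam (lift k (S c) t1)
  end.

Fixpoint subst (s : term) (c : nat) (t : term) : term :=
  match t with
  | Var n => if n =? c then lift c 0 s
             else if c <? n then Var (n - 1) else Var n
  | App t1 t2 => App (subst s c t1) (subst s c t2)
  | Lam t1 => Lam (subst s (S c) t1)
  end.

Inductive beta : term -> term -> Prop :=
| beta_redex : forall t s, beta (App (Lam t) s) (subst s 0 t)
| beta_appl : forall t t' s, beta t t' -> beta (App t s) (App t' s)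
| beta_appr : forall t s s', beta s s' -> beta (App t s) (App t s')
| beta_lam : forall t t', beta t t' -> beta (Lam t) (Lam t').

Inductive betaeta : term -> term -> Prop :=
| be_redex : forall t s, betaeta (App (Lam t) s) (subst s 0 t)
| be_eta : forall t, betaeta (Lam (App (lift 1 0 t) (Var 0))) t
| be_appl : forall t t' s, betaeta t t' -> betaeta (App t s) (App t' s)
| be_appr : forall t s s', betaeta s s' -> betaeta (App t s) (App t s')
| be_lam : forall t t', betaeta t t' -> betaeta (Lam t) (Lam t').

Definition beta_red := clos_refl_trans term beta.
Definition betaeta_red := clos_refl_trans term betaeta.
Definition beta_conv := clos_refl_sym_trans term beta.

Fixpoint closed_at (k : nat) (t : term) : Prop :=
  match t with
  | Var n => n < k
  | App t1 t2 => closed_at k t1 /\ closed_at k t2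
  | Lam t1 => closed_at (S k) t1
  end.
Definition closed (t : term) : Prop := closed_at 0 t.

Definition apps (h : term) (args : list term) : term := fold_left App args h.
Fixpoint lams (n : nat) (t : term) : term :=
  match n with 0 => t | S m => Lam (lams m t) end.

Definition has_hnf (M : term) : Prop :=
  exists n j args, beta_red M (lams n (apps (Var j) args)).

CoInductive bt_eq : term -> term -> Prop :=
| bt_unsolv : forall M N, ~ has_hnf M -> ~ has_hnf N -> bt_eq M N
| bt_hnf : forall M N n j Ms Ns,
    beta_red M (lams n (apps (Var j) Ms)) ->
    beta_red N (lams n (apps (Var j) Ns)) ->
    length Ms = length Ns ->
    (forall i, i < length Ms -> bt_eq (nth i Ms (Var 0)) (nth i Ns (Var 0))) ->
    bt_eq M N.

Definition I : term := Lam (Var 0).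
Definition omega_small : term := Lam (App (Var 0) (Var 0)).
Definition Omega : term := App omega_small omega_small.

Definition church (n : nat) : term :=
  Lam (Lam (Nat.iter n (fun t => App (Var 1) t) (Var 0))).

(* [M, S] = \z. z M S  (z fresh) *)
Definition pair_t (M S : term) : term :=
  Lam (App (App (Var 0) (lift 1 0 M)) (lift 1 0 S)).

Definition effective (M : nat -> term) : Prop :=
  exists F, closed F /\ forall n, beta_conv (App F (church n)) (M n).

Definition is_stream (M : nat -> term) (S : term) : Prop :=
  exists s : nat -> term, s 0 = S /\
    forall k, beta_conv (s k) (pair_t (M k) (s (Datatypes.S k))).

(* the two free variables y, x used in the defining equations *)
Definition vy : term := Var 0.
Definition vx : term := Var 1.

(* Main.v *)
Require Import Defs.
From Stdlib Require Import Arith List Relations Lia Classical.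
Import ListNotations.

Ltac vcase := repeat (cbn [lift subst] in *; match goal with
 | |- context [?a <=? ?b] => destruct (Nat.leb_spec a b)
 | |- context [?a =? ?b] => destruct (Nat.eqb_spec a b)
 | |- context [?a <? ?b] => destruct (Nat.ltb_spec a b)
 end); try (exfalso; lia); try reflexivity; try (f_equal; lia).

Lemma lift_0 : forall t c, lift 0 c t = t.
Proof. induction t; intros; simpl; try (f_equal; auto). vcase. Qed.

Lemma lift_lift_perm : forall t j k c d, c <= d ->
  lift k c (lift j d t) = lift j (d + k) (lift k c t).
Proof. induction t; intros; cbn [lift subst].
 - vcase.
 - f_equal; auto.
 - f_equal. rewrite IHt by lia. f_equal. Qed.

Lemma lift_lift_merge : forall t j k c d, c <= d <= c + k ->
  lift j d (lift k c t) = lift (j + k) c t.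
Proof. induction t; intros; cbn [lift subst].
 - vcase.
 - f_equal; auto.
 - f_equal. apply IHt; lia. Qed.

Lemma lift_subst_lo : forall t s k c d, d <= c ->
  lift k c (subst s d t) = subst (lift k (c - d) s) d (lift k (S c) t).
Proof. induction t; intros; cbn [lift subst].
 - vcase. subst n. rewrite (lift_lift_perm s k d 0 (c-d)) by lia. f_equal. lia.
 - f_equal; auto.
 - f_equal. rewrite IHt by lia. reflexivity. Qed.

Lemma lift_subst_hi : forall t s k c d, c <= d ->
  lift k c (subst s d t) = subst s (d + k) (lift k c t).
Proof. induction t; intros; cbn [lift subst].
 - vcase. subst n. rewrite lift_lift_merge by lia. f_equal. lia.
 - f_equal; auto.
 - f_equal. rewrite IHt by lia. reflexivity. Qed.

Lemma subst_lift : forall t s k c d, c <= d <= c + k ->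
  subst s d (lift (S k) c t) = lift k c t.
Proof. induction t; intros; cbn [lift subst].
 - vcase.
 - f_equal; auto.
 - f_equal. apply IHt; lia. Qed.

Lemma subst_subst : forall u s t c d, d <= c ->
  subst s c (subst t d u) = subst (subst s (c - d) t) d (subst s (S c) u).
Proof. induction u; intros; cbn [lift subst].
 - vcase.
   + subst n. rewrite lift_subst_hi by lia. f_equal. lia.
   + assert (n = S c) by lia. subst n. rewrite subst_lift by lia. reflexivity.
 - f_equal; auto.
 - f_equal. rewrite IHu by lia. reflexivity. Qed.

Lemma closed_at_mono : forall t k m, closed_at k t -> k <= m -> closed_at m t.
Proof. induction t; simpl; intros; try tauto; try lia.
 - destruct H; split; eauto.
 - eapply IHt; eauto; lia. Qed.

Lemma lift_closed : forall t k j c, closed_at k t -> k <= c -> lift j c t = t.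
Proof. induction t; intros; cbn [lift subst closed_at] in *.
 - vcase.
 - destruct H; f_equal; eauto.
 - f_equal. eapply IHt; eauto; lia. Qed.

Lemma subst_closed : forall t k s c, closed_at k t -> k <= c -> subst s c t = t.
Proof. induction t; intros; cbn [lift subst closed_at] in *.
 - vcase.
 - destruct H; f_equal; eauto.
 - f_equal. eapply IHt; eauto; lia. Qed.

Lemma closed_lift : forall t m j c, closed_at m t -> closed_at (m + j) (lift j c t).
Proof. induction t; intros; cbn [lift subst closed_at] in *.
 - destruct (Nat.leb_spec c n); simpl; lia.
 - destruct H; split; eauto.
 - apply (IHt (S m)); auto. Qed.

Lemma closed_subst : forall t s k c, closed_at (S k) t -> c <= k -> closed_at (k - c) s ->
  closed_at k (subst s c t).
Proof. induction t; intros; cbn [lift subst closed_at] in *.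
 - destruct (Nat.eqb_spec n c).
   + replace k with (k - c + c) by lia. apply closed_lift; auto.
   + destruct (Nat.ltb_spec c n); simpl; lia.
 - destruct H; split; eauto.
 - apply IHt; auto; try lia. Qed.

Lemma beta_closed : forall t t', beta t t' -> forall k, closed_at k t -> closed_at k t'.
Proof. induction 1; intros; simpl in *; try tauto.
 - destruct H. apply closed_subst; auto; try lia. rewrite Nat.sub_0_r; auto.
 - destruct H0; split; auto.
 - destruct H0; split; auto.
 - auto. Qed.

Lemma red_closed : forall t t', beta_red t t' -> forall k, closed_at k t -> closed_at k t'.
Proof. induction 1; intros; eauto using beta_closed. Qed.

Inductive par : term -> term -> Prop :=
| par_var : forall n, par (Var n) (Var n)
| par_app : forall t t' s s', par t t' -> par s s' -> par (App t s) (App t' s')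
| par_lam : forall t t', par t t' -> par (Lam t) (Lam t')
| par_beta : forall t t' s s', par t t' -> par s s' -> par (App (Lam t) s) (subst s' 0 t').

Lemma par_refl : forall t, par t t.
Proof. induction t; constructor; auto. Qed.

Lemma par_lift : forall t t', par t t' -> forall k c, par (lift k c t) (lift k c t').
Proof. induction 1; intros; cbn [lift].
 - apply par_refl.
 - constructor; auto.
 - constructor; auto.
 - rewrite lift_subst_lo by lia. rewrite Nat.sub_0_r. constructor; auto. Qed.

Lemma par_subst : forall t t', par t t' -> forall s s' c, par s s' -> par (subst s c t) (subst s' c t').
Proof. induction 1; intros; cbn [subst].
 - destruct (n =? c). apply par_lift; auto. apply par_refl.
 - constructor; auto.
 - constructor; auto.
 - rewrite subst_subst by lia. rewrite Nat.sub_0_r. constructor; auto. Qed.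

Fixpoint cd (t : term) : term :=
  match t with
  | Var n => Var n
  | Lam b => Lam (cd b)
  | App t1 t2 => match t1 with
                 | Lam b => subst (cd t2) 0 (cd b)
                 | _ => App (cd t1) (cd t2)
                 end
  end.

Lemma par_cd : forall t t', par t t' -> par t' (cd t).
Proof. induction 1; simpl.
 - constructor.
 - destruct t; try (constructor; auto).
   inversion H; subst. inversion IHpar1; subst. constructor; auto.
 - constructor; auto.
 - apply par_subst; auto. Qed.

Lemma par_strip : forall t u, par t u -> forall v, clos_refl_trans_1n term par t v ->
  exists w, clos_refl_trans_1n term par u w /\ par v w.
Proof. intros t u H v Hv. revert u H. induction Hv; intros.
 - exists u. split. constructor. auto.
 - destruct (IHHv (cd x)) as [w [H1 H2]]. apply par_cd; auto.
   exists w. split; auto. econstructor. apply par_cd. eauto. auto. Qed.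

Lemma par_confl : forall t u, clos_refl_trans_1n term par t u -> forall v, clos_refl_trans_1n term par t v ->
  exists w, clos_refl_trans_1n term par u w /\ clos_refl_trans_1n term par v w.
Proof. induction 1; intros.
 - exists v; split; auto. constructor.
 - destruct (par_strip _ _ H v H1) as [w [H2 H3]].
   destruct (IHclos_refl_trans_1n w H2) as [w' [H4 H5]].
   exists w'; split; auto. econstructor; eauto. Qed.

Lemma red_app : forall t t' s s', beta_red t t' -> beta_red s s' -> beta_red (App t s) (App t' s').
Proof. intros. apply rt_trans with (App t' s).
 - induction H; [apply rt_step; constructor; auto | apply rt_refl | eapply rt_trans; eauto].
 - induction H0; [apply rt_step; constructor; auto | apply rt_refl | eapply rt_trans; eauto]. Qed.

Lemma red_lam : forall t t', beta_red t t' -> beta_red (Lam t) (Lam t').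
Proof. induction 1; [apply rt_step; constructor; auto | apply rt_refl | eapply rt_trans; eauto]. Qed.

Lemma par_red : forall t t', par t t' -> beta_red t t'.
Proof. induction 1.
 - apply rt_refl.
 - apply red_app; auto.
 - apply red_lam; auto.
 - eapply rt_trans. apply red_app. apply red_lam. eauto. eauto. apply rt_step. constructor. Qed.

Lemma beta_par : forall t t', beta t t' -> par t t'.
Proof. induction 1; constructor; auto using par_refl. Qed.

Lemma red_rt1n : forall t u, beta_red t u -> clos_refl_trans_1n term par t u.
Proof. induction 1.
 - econstructor. apply beta_par; eauto. constructor.
 - constructor.
 - apply clos_rt_rt1n_iff. apply clos_rt_rt1n_iff in IHclos_refl_trans1.
   apply clos_rt_rt1n_iff in IHclos_refl_trans2. eapply rt_trans; eauto. Qed.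

Lemma rt1n_red : forall t u, clos_refl_trans_1n term par t u -> beta_red t u.
Proof. induction 1. apply rt_refl. eapply rt_trans. apply par_red; eauto. auto. Qed.

Lemma red_confl : forall t u v, beta_red t u -> beta_red t v ->
  exists w, beta_red u w /\ beta_red v w.
Proof. intros. destruct (par_confl t u (red_rt1n _ _ H) v (red_rt1n _ _ H0)) as [w [? ?]].
 exists w; split; apply rt1n_red; auto. Qed.

Lemma conv_CR : forall t u, beta_conv t u -> exists w, beta_red t w /\ beta_red u w.
Proof. induction 1.
 - exists y; split; [apply rt_step; auto | apply rt_refl].
 - exists x; split; apply rt_refl.
 - destruct IHclos_refl_sym_trans as [w [? ?]]; eauto.
 - destruct IHclos_refl_sym_trans1 as [w1 [? ?]]. destruct IHclos_refl_sym_trans2 as [w2 [? ?]].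
   destruct (red_confl y w1 w2) as [w [? ?]]; auto.
   exists w; split; eapply rt_trans; eauto. Qed.

Lemma red_conv : forall t u, beta_red t u -> beta_conv t u.
Proof. induction 1. apply rst_step; auto. apply rst_refl. eapply rst_trans; eauto. Qed.

Lemma conv_app : forall t t' s s', beta_conv t t' -> beta_conv s s' -> beta_conv (App t s) (App t' s').
Proof. intros. apply rst_trans with (App t' s).
 - induction H; [apply rst_step; constructor; auto | apply rst_refl | apply rst_sym; auto | eapply rst_trans; eauto].
 - induction H0; [apply rst_step; constructor; auto | apply rst_refl | apply rst_sym; auto | eapply rst_trans; eauto]. Qed.

Lemma conv_lam : forall t t', beta_conv t t' -> beta_conv (Lam t) (Lam t').
Proof. induction 1; [apply rst_step; constructor; auto | apply rst_refl | apply rst_sym; auto | eapply rst_trans; eauto]. Qed.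

Lemma apps_app1 : forall h l a, apps h (l ++ [a]) = App (apps h l) a.
Proof. intros. unfold apps. rewrite fold_left_app. reflexivity. Qed.

Lemma apps_var_not_lam : forall j l t, apps (Var j) l <> Lam t.
Proof. intros j l. induction l using rev_ind; intros t; simpl.
 - discriminate.
 - rewrite apps_app1. discriminate. Qed.

Lemma Forall2_red_refl : forall l, Forall2 beta_red l l.
Proof. induction l; constructor; auto. apply rt_refl. Qed.

Lemma beta_apps_var : forall j Ms P, beta (apps (Var j) Ms) P ->
  exists Ms', P = apps (Var j) Ms' /\ Forall2 beta_red Ms Ms'.
Proof. intros j Ms. induction Ms using rev_ind; intros P H.
 - simpl in H. inversion H.
 - rewrite apps_app1 in H. inversion H; subst.
   + exfalso. eapply apps_var_not_lam; eauto.
   + destruct (IHMs _ H3) as [Ms' [-> HF]]. exists (Ms' ++ [x]). split.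
     rewrite apps_app1; auto. apply Forall2_app; auto. constructor; [apply rt_refl|constructor].
   + exists (Ms ++ [s']). split. rewrite apps_app1; auto. apply Forall2_app.
     apply Forall2_red_refl. constructor; [apply rt_step; auto|constructor]. Qed.

Lemma Forall2_red_trans : forall l1 l2 l3, Forall2 beta_red l1 l2 -> Forall2 beta_red l2 l3 ->
  Forall2 beta_red l1 l3.
Proof. intros l1 l2 l3 H. revert l3. induction H; intros l3 H'; inversion H'; subst; constructor; eauto.
 eapply rt_trans; eauto. Qed.

Lemma red_apps_var : forall j Ms P, beta_red (apps (Var j) Ms) P ->
  exists Ms', P = apps (Var j) Ms' /\ Forall2 beta_red Ms Ms'.
Proof. intros j Ms P H. apply clos_rt_rt1n_iff in H. remember (apps (Var j) Ms) as A.
 revert Ms HeqA. induction H; intros; subst.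
 - exists Ms; split; auto. apply Forall2_red_refl.
 - destruct (beta_apps_var _ _ _ H) as [Ms1 [-> HF1]].
   destruct (IHclos_refl_trans_1n Ms1 eq_refl) as [Ms2 [-> HF2]].
   exists Ms2; split; auto. eapply Forall2_red_trans; eauto. Qed.

Lemma red_lam_inv : forall t u, beta_red (Lam t) u -> exists t', u = Lam t' /\ beta_red t t'.
Proof. intros t u H. apply clos_rt_rt1n_iff in H. remember (Lam t) as A. revert t HeqA.
 induction H; intros; subst.
 - exists t; split; auto. apply rt_refl.
 - inversion H; subst. destruct (IHclos_refl_trans_1n t' eq_refl) as [t'' [-> ?]].
   exists t''; split; auto. eapply rt_trans; [apply rt_step|]; eauto. Qed.

Lemma red_hnf : forall n j Ms P, beta_red (lams n (apps (Var j) Ms)) P ->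
  exists Ms', P = lams n (apps (Var j) Ms') /\ Forall2 beta_red Ms Ms'.
Proof. induction n; intros; simpl in *.
 - apply red_apps_var; auto.
 - destruct (red_lam_inv _ _ H) as [t' [-> H1]]. destruct (IHn _ _ _ H1) as [Ms' [-> ?]].
   exists Ms'; auto. Qed.

Lemma conv_sym : forall a b, beta_conv a b -> beta_conv b a.
Proof. intros; apply rst_sym; auto. Qed.

Lemma conv_hnf : forall M N n j Ms, beta_conv M N -> beta_red M (lams n (apps (Var j) Ms)) ->
  exists Ns, beta_red N (lams n (apps (Var j) Ns)) /\ Forall2 beta_conv Ms Ns.
Proof. intros. destruct (conv_CR _ _ H) as [P [HM HN]].
 destruct (red_confl _ _ _ H0 HM) as [Q [H1 H2]].
 destruct (red_hnf _ _ _ _ H1) as [Ms' [-> HF]].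
 exists Ms'. split. eapply rt_trans; eauto.
 clear -HF. induction HF; constructor; auto. apply red_conv; auto. Qed.

Lemma Forall2_nth' : forall (R : term -> term -> Prop) l l', Forall2 R l l' ->
  forall i d, i < length l -> R (nth i l d) (nth i l' d).
Proof. induction 1; intros; simpl in *. lia. destruct i; auto. apply IHForall2; lia. Qed.

Lemma has_hnf_conv : forall M N, beta_conv M N -> has_hnf M -> has_hnf N.
Proof. intros M N H [n [j [Ms HM]]]. destruct (conv_hnf _ _ _ _ _ H HM) as [Ns [? ?]].
 exists n, j, Ns; auto. Qed.

Lemma conv_bt : forall M N, beta_conv M N -> bt_eq M N.
Proof. cofix CIH. intros M N H.
 destruct (classic (has_hnf M)) as [[n [j [Ms HM]]] | Hn].
 - destruct (conv_hnf _ _ _ _ _ H HM) as [Ns [HN HF]].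
   apply (bt_hnf M N n j Ms Ns HM HN).
   + eapply Forall2_length; eauto.
   + intros i Hi. apply CIH. apply Forall2_nth'; auto.
 - apply bt_unsolv; auto. intro HN. apply Hn. eapply has_hnf_conv; eauto. apply conv_sym; auto.
Qed.

Lemma subst_var0 : forall t c, closed_at (S c) t -> subst (Var 0) c t = t.
Proof. induction t; intros; cbn [subst closed_at] in *.
 - vcase.
 - destruct H; f_equal; auto.
 - f_equal; auto. Qed.

Lemma apps_var_eq_app : forall j l M a, apps (Var j) l = App M a ->
  exists l', l = l' ++ [a] /\ M = apps (Var j) l'.
Proof. intros j l. induction l using rev_ind; intros; simpl in *. discriminate.
 rewrite apps_app1 in H. inversion H; subst. eauto. Qed.

Lemma hnf_app_var0 : forall T, beta_red (App T (Var 0)) (Var 0) -> True.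
Proof. auto. Qed.

Lemma unsolv_eta_aux : forall A P, clos_refl_trans_1n term beta A P ->
  forall M, A = App M (Var 0) -> closed M ->
  forall n j args, P = lams n (apps (Var j) args) -> has_hnf M.
Proof. induction 1 as [A|A B P Hs Hr IH]; intros M HA HM n j args HP; subst.
 - destruct n; simpl in HP; [|discriminate].
   symmetry in HP. destruct (apps_var_eq_app _ _ _ _ HP) as [l' [_ ->]].
   exists 0, j, l'. apply rt_refl.
 - inversion Hs; subst.
   + unfold closed in HM; simpl in HM. rewrite subst_var0 in Hr by auto.
     apply clos_rt_rt1n_iff in Hr.
     exists (S n), j, args. simpl. apply red_lam. auto.
   + destruct (IH t' eq_refl) with (n := n) (j := j) (args := args) as [n' [j' [a' Hr']]]; auto.
     eapply beta_closed; eauto.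
     exists n', j', a'. eapply rt_trans; [apply rt_step|]; eauto.
   + match goal with H : beta (Var 0) _ |- _ => inversion H end. Qed.

Lemma unsolv_eta : forall M, closed M -> has_hnf (Lam (App M (Var 0))) -> has_hnf M.
Proof. intros M HM [n [j [args H]]]. destruct (red_lam_inv _ _ H) as [t' [Ht Hr]].
 destruct n; simpl in Ht. exfalso; eapply apps_var_not_lam; eauto.
 inversion Ht; subst. apply clos_rt_rt1n_iff in Hr. eapply unsolv_eta_aux; eauto. Qed.
Definition Ft := Lam (Lam (Var 0)).
Definition Kt := Lam (Lam (Var 1)).
Definition Tt := Lam (App (Var 0) Ft).
Definition C0 := App (App (App (Var 4) Tt) (App (App (Var 3) (Var 0)) (Var 1))) Kt.
Definition EqT := Lam (Lam (Lam (App (App (Lam (Lam C0)) (Var 0)) (App (App (Var 2) Kt) I)))).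
Definition Cf N X := App (App (App N Tt) (App (App X vy) vx)) Kt.
Definition Df N X := Lam (App (App (Lam (Lam (Cf N X))) (Var 0)) (App (App N Kt) I)).

Lemma EqT_red : forall N X, closed N -> closed X -> beta_red (App (App EqT N) X) (Df N X).
Proof. intros N X HN HX. eapply rt_trans. apply red_app. apply rt_step. apply beta_redex. apply rt_refl.
 eapply rt_trans. apply rt_step. apply beta_redex.
 unfold EqT, C0, Df, Cf, Kt, Tt, Ft, I, vx, vy. cbn [subst lift Nat.eqb Nat.ltb Nat.leb Nat.sub].
 rewrite (lift_closed N 0 4 0 HN), (lift_closed N 0 2 0 HN), (lift_closed X 0 3 0 HX) by lia.
 rewrite (subst_closed N 0 X 3 HN), (subst_closed N 0 X 1 HN) by lia. apply rt_refl.
Qed.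

Lemma church_subst1 : forall n f,
  subst f 1 (Nat.iter n (fun t => App (Var 1) t) (Var 0)) = Nat.iter n (App (lift 1 0 f)) (Var 0).
Proof. induction n; intros; simpl; auto. rewrite IHn. reflexivity. Qed.

Lemma iter_subst0 : forall n f a,
  subst a 0 (Nat.iter n (App (lift 1 0 f)) (Var 0)) = Nat.iter n (App f) a.
Proof. induction n; intros; simpl.
 - apply lift_0.
 - rewrite IHn. rewrite (subst_lift f a 0 0 0) by lia. rewrite lift_0. reflexivity. Qed.

Lemma church_red : forall n f a, beta_red (App (App (church n) f) a) (Nat.iter n (App f) a).
Proof. intros. eapply rt_trans. apply red_app. apply rt_step. apply beta_redex. apply rt_refl.
 unfold church. cbn [subst]. rewrite church_subst1.
 eapply rt_trans. apply rt_step. apply beta_redex. rewrite iter_subst0. apply rt_refl. Qed.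

Lemma pair_red : forall M S f, beta_red (App (pair_t M S) f) (App (App f M) S).
Proof. intros. unfold pair_t. eapply rt_trans. apply rt_step. apply beta_redex.
 cbn [subst]. simpl. rewrite lift_0. rewrite !(subst_lift _ f 0 0 0) by lia. rewrite !lift_0. apply rt_refl. Qed.

Lemma Ft_red : forall M S, beta_red (App (App Ft M) S) S.
Proof. intros. unfold Ft. eapply rt_trans. apply red_app. apply rt_step. apply beta_redex. apply rt_refl.
 simpl. eapply rt_trans. apply rt_step. apply beta_redex. simpl. rewrite lift_0. apply rt_refl. Qed.

Lemma Kt_red : forall M S, beta_red (App (App Kt M) S) M.
Proof. intros. unfold Kt. eapply rt_trans. apply red_app. apply rt_step. apply beta_redex. apply rt_refl.
 simpl. eapply rt_trans. apply rt_step. apply beta_redex. rewrite (subst_lift M S 0 0 0) by lia. rewrite lift_0. apply rt_refl. Qed.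

Lemma Tt_red : forall u, beta_red (App Tt u) (App u Ft).
Proof. intros. unfold Tt. eapply rt_trans. apply rt_step. apply beta_redex. simpl. rewrite lift_0. apply rt_refl. Qed.

Lemma iter_stream : forall (s Mk : nat -> term),
  (forall k, beta_conv (s k) (pair_t (Mk k) (s (S k)))) ->
  forall k, beta_conv (Nat.iter k (App Tt) (s 0)) (s k).
Proof. intros s Mk Hs. induction k; simpl. apply rst_refl.
 eapply rst_trans. apply red_conv. apply Tt_red.
 eapply rst_trans. apply conv_app. apply IHk. apply rst_refl.
 eapply rst_trans. apply conv_app. apply Hs. apply rst_refl.
 eapply rst_trans. apply red_conv. apply pair_red. apply red_conv. apply Ft_red. Qed.

Lemma Cf_conv : forall n X (s Mk : nat -> term), s 0 = App (App X vy) vx ->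
  (forall k, beta_conv (s k) (pair_t (Mk k) (s (S k)))) ->
  beta_conv (Cf (church n) X) (Mk n).
Proof. intros. unfold Cf. rewrite <- H.
 eapply rst_trans. apply conv_app. apply red_conv. apply church_red. apply rst_refl.
 eapply rst_trans. apply conv_app. eapply iter_stream; eauto. apply rst_refl.
 eapply rst_trans. apply conv_app. apply H0. apply rst_refl.
 eapply rst_trans. apply red_conv. apply pair_red. apply red_conv. apply Kt_red. Qed.

Lemma red_apps_head : forall l h h', beta_red h h' -> beta_red (apps h l) (apps h' l).
Proof. induction l; intros; simpl; auto. apply IHl. apply red_app; auto. apply rt_refl. Qed.

Lemma K_drop : forall n A rest,
  beta_red (apps (Nat.iter n (App Kt) A) (repeat Omega n ++ rest)) (apps A rest).
Proof. induction n; intros; simpl. apply rt_refl.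
 eapply rt_trans. apply red_apps_head. apply Kt_red. apply IHn. Qed.

Lemma closed_Omega : closed Omega.
Proof. unfold closed, Omega, omega_small; simpl; repeat split; lia. Qed.

Lemma subst_apps : forall l s c h, subst s c (apps h l) = apps (subst s c h) (map (subst s c) l).
Proof. induction l; intros; simpl; auto. Qed.

Lemma closed_apps : forall l k h, closed_at k h -> Forall (closed_at k) l -> closed_at k (apps h l).
Proof. induction l; intros; simpl; auto. inversion H0; subst. apply IHl; auto. simpl; auto. Qed.

Lemma final_red : forall n last, closed_at 2 last ->
  beta_red (Lam (App (App (Lam (Lam (apps vy (repeat Omega n ++ [last])))) (Var 0)) (App (App (church n) Kt) I)))
           (Lam (subst (App (App (church n) Kt) I) 0 last)).
Proof. intros. apply red_lam.
 assert (Hc : closed_at 2 (apps vy (repeat Omega n ++ [last]))).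
 { apply closed_apps. simpl; lia. apply Forall_app; split; auto.
   apply Forall_forall. intros x Hx. apply repeat_spec in Hx. subst x.
   eapply closed_at_mono. apply closed_Omega. lia. }
 eapply rt_trans. apply red_app. apply rt_step. apply beta_redex. apply rt_refl.
 cbn [subst]. rewrite subst_var0 by auto.
 eapply rt_trans. apply rt_step. apply beta_redex.
 rewrite subst_apps. rewrite map_app. simpl map.
 replace (map (subst (App (App (church n) Kt) I) 0) (repeat Omega n)) with (repeat Omega n).
 2:{ rewrite map_repeat. reflexivity. }
 unfold vy. cbn [subst Nat.eqb]. rewrite lift_0.
 eapply rt_trans. apply red_apps_head. apply church_red.
 eapply rt_trans. apply K_drop. simpl. eapply rt_trans. apply rt_step. unfold I at 1. apply beta_redex.
 simpl. rewrite lift_0. apply rt_refl. Qed.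

Lemma closed_church : forall n, closed (church n).
Proof. intros. unfold closed, church. simpl. induction n; simpl; auto. Qed.

Lemma closed_apps_head : forall l k h, closed_at k (apps h l) -> closed_at k h.
Proof. induction l; intros; simpl in *; auto. apply IHl in H. simpl in H. tauto. Qed.

Lemma Eq_conv : forall n X (s Mk : nat -> term) last, closed X -> s 0 = App (App X vy) vx ->
  (forall k, beta_conv (s k) (pair_t (Mk k) (s (S k)))) ->
  Mk n = apps vy (repeat Omega n ++ [last]) -> closed_at 2 last ->
  beta_conv (App (App EqT (church n)) X) (Lam (subst (App (App (church n) Kt) I) 0 last)).
Proof. intros. eapply rst_trans. apply red_conv. apply EqT_red. apply closed_church. auto.
 unfold Df. eapply rst_trans. apply conv_lam. apply conv_app. apply conv_app.
 apply conv_lam. apply conv_lam. eapply Cf_conv; eauto. apply rst_refl. apply rst_refl.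
 rewrite H2. apply red_conv. apply final_red. auto. Qed.

Theorem mainTheorem13 :
  forall (eta : nat -> term) (IOm etaOm : term),
    (forall i, closed (eta i)) ->
    (forall i, betaeta_red (eta i) I) ->
    effective eta ->
    closed IOm ->
    is_stream (fun n => apps vy (repeat Omega n ++ [vx])) (App (App IOm vy) vx) ->
    closed etaOm ->
    is_stream (fun n => apps vy (repeat Omega n ++ [App (eta n) vx]))
              (App (App etaOm vy) vx) ->
    exists Eq : term, closed Eq /\
      forall n : nat,
        bt_eq (App (App Eq (church n)) IOm) I /\
        bt_eq (App (App Eq (church n)) etaOm) (eta n).
Proof.
 intros eta IOm etaOm Hcl _ _ HIc [sI [HsI0 HsI]] Hec [sE [HsE0 HsE]].
 exists EqT. split.
 { unfold closed, EqT, C0, Kt, Tt, Ft, I. simpl. repeat split; lia. }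
 intros n. split.
 - apply conv_bt. eapply rst_trans. eapply (Eq_conv n IOm sI (fun n => apps vy (repeat Omega n ++ [vx])) vx); eauto.
   unfold vx; simpl; lia. simpl. apply rst_refl.
 - assert (Hc : beta_conv (App (App EqT (church n)) etaOm) (Lam (App (eta n) (Var 0)))).
   { eapply rst_trans. eapply (Eq_conv n etaOm sE (fun n => apps vy (repeat Omega n ++ [App (eta n) vx])) (App (eta n) vx)); eauto.
     unfold vx; simpl; split; [|lia]. eapply closed_at_mono. apply Hcl. lia.
     unfold vx. cbn [subst Nat.eqb Nat.ltb Nat.sub]. simpl.
     rewrite (subst_closed (eta n) 0) by (try apply Hcl; lia). apply rst_refl. }
   destruct (classic (has_hnf (eta n))) as [[k [j [args Hr]]] | Hn].
   + apply conv_bt. eapply rst_trans. apply Hc.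
     assert (Hk : closed_at 0 (lams k (apps (Var j) args))) by (eapply red_closed; eauto; apply Hcl).
     destruct k as [|k].
     { simpl in Hk. apply closed_apps_head in Hk. simpl in Hk. lia. }
     simpl in Hk. eapply rst_trans. 2:{ apply rst_sym. apply red_conv. apply Hr. }
     apply red_conv. simpl. apply red_lam.
     eapply rt_trans. apply red_app. apply Hr. apply rt_refl.
     eapply rt_trans. apply rt_step. apply beta_redex. rewrite subst_var0 by auto. apply rt_refl.
   + apply bt_unsolv; auto.
     * intro H. apply Hn. apply unsolv_eta. apply Hcl. eapply has_hnf_conv; eauto.
Qed.
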